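(* For all $n\in\mathbb N$ the following holds in the $q$-shuffle algebra $\mathbb V$: $$0=\sum_{i=0}^n(-1)^i[2n-i]_q\,C_i\star\tilde G_{n-i}.$$
   Context: Let $\mathbb F$ be a field and let $q\in\mathbb F$ be nonzero and not a root of unity. Let $[m]_q=(q^m-q^{-m})/(q-q^{-1})$ for $m\in\mathbb Z$. Let $\mathbb V$ be the free associative $\mathbb F$-algebra on noncommuting $x,y$, with basis the words (including $1$). Juxtaposition denotes concatenation. Set $\langle x,x\rangle=\langle y,y\rangle=2$ and $\langle x,y\rangle=\langle y,x\rangle=-2$. The $q$-shuffle product $\star$ is the bilinear product determined as follows: - $1\star v=v\star 1=v$; - for nontrivial words $u=u_1\cdots u_r$ and $v=v_1\cdots v_s$, $$u\star v=u_1((u_2\cdots u_r)\star v)+v_1(u\star(v_2\cdots v_s))q^{\langle u_1,v_1\rangle+\cdots+\langle u_r,v_1\rangle}.$$ This makes $\mathbb V$ an associative algebra, the $q$-shuffle algebra. For $k\in\mathbb N$, let $\tilde G_k=xyxy\cdots xy$ be the word of length $2k$, with $\tilde G_0=1$. Let $\overline x=1$ and $\overline y=-1$. A word $v_1\cdots v_m$ is Catalan if $\overline v_1+\cdots+\overline v_i\ge0$ for $1\le i\le m-1$ and $\overline v_1+\cdots+\overline v_m=0$. For $n\in\mathbb N$, $$C_n=\sum v_1\cdots v_{2n}\,[1]_q[1+\overline v_1]_q\cdots[1+\overline v_1+\cdots+\overline v_{2n}]_q,$$ where the sum is over Catalan words of length $2n$ (so $C_0=1$). *)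

(* Defs.v *)
From mathcomp Require Import all_boot all_order all_algebra.
Set Implicit Arguments. Unset Strict Implicit. Unset Printing Implicit Defensive.
Import Order.TTheory GRing.Theory Num.Theory.
Local Open Scope ring_scope.

Definition letter := bool.
Definition lx : letter := true.
Definition ly : letter := false.
Definition word := seq letter.

Section QShuffle.
Variables (F : fieldType) (q : F).

(* Elements of the free algebra V are represented as formal finite linear
   combinations of words: lists of (coefficient, word) pairs.  Two such lists
   represent the same element of V iff they have the same coefficient on every
   word ([vcoef]). *)
Definition vec := seq (F * word).

Definition vcoef (a : vec) (w : word) : F :=
  \sum_(p <- a) (if p.2 == w then p.1 else 0).

Definition vscale (c : F) (a : vec) : vec := [seq (c * p.1, p.2) | p <- a].

Definition vprefix (l : letter) (a : vec) : vec := [seq (p.1, l :: p.2) | p <- a].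

Definition pairing (a b : letter) : int := if a == b then 2%:Z else - 2%:Z.

Definition qint (m : int) : F := (q ^ m - q ^ (- m)) / (q - q^-1).

Fixpoint wstar (u : word) : word -> vec :=
  match u with
  | [::] => fun v => [:: (1, v)]
  | a :: u' =>
    fix wstar_u (v : word) : vec :=
      match v with
      | [::] => [:: (1, u)]
      | b :: v' =>
          vprefix a (wstar u' v)
          ++ vscale (q ^ (\sum_(c <- u) pairing c b)) (vprefix b (wstar_u v'))
      end
  end.

Definition vstar (a b : vec) : vec :=
  flatten [seq vscale (s.1 * t.1) (wstar s.2 t.2) | s <- a, t <- b].

Definition Gt (k : nat) : vec := [:: (1, flatten (nseq k [:: lx; ly]))].

Fixpoint all_words (m : nat) : seq word :=
  match m with
  | 0 => [:: [::]]
  | m'.+1 => [seq l :: w | l <- [:: lx; ly], w <- all_words m']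
  end.

Definition lbar (l : letter) : int := if l then 1 else -1.

Definition psum (w : word) (i : nat) : int := \sum_(l <- take i w) lbar l.

Definition catalan (w : word) : bool :=
  [forall i : 'I_(size w), (1 <= i)%N ==> (0 <= psum w i)]
  && (psum w (size w) == 0).

Definition Cat (n : nat) : vec :=
  [seq (qint 1 * \prod_(1 <= i < (2 * n).+1) qint (1 + psum w i), w)
  | w <- all_words (2 * n) & catalan w].

End QShuffle.

(* Main.v *)
Require Import Defs.
From mathcomp Require Import all_boot all_order all_algebra.
From mathcomp Require Import ring zify.
Import Order.TTheory GRing.Theory Num.Theory.
Local Open Scope ring_scope.
Set Implicit Arguments. Unset Strict Implicit. Unset Printing Implicit Defensive.

Section Work.
Variables (F : fieldType) (q : F).

Lemma vcoef_cat (a b : vec F) w : vcoef (a ++ b) w = vcoef a w + vcoef b w.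
Proof. by rewrite /vcoef big_cat. Qed.

Lemma vcoef_scale c (a : vec F) w : vcoef (vscale c a) w = c * vcoef a w.
Proof.
rewrite /vcoef /vscale big_map mulr_sumr; apply: eq_bigr => p _ /=.
by case: ifP; rewrite ?mulr0.
Qed.

Lemma vcoef_prefix_nil l (a : vec F) : vcoef (vprefix l a) [::] = 0.
Proof. by rewrite /vcoef /vprefix big_map big1. Qed.

Lemma vcoef_prefix l (a : vec F) c w :
  vcoef (vprefix l a) (c :: w) = (l == c)%:R * vcoef a w.
Proof.
rewrite /vcoef /vprefix big_map mulr_sumr; apply: eq_bigr => p _ /=.
rewrite eqseq_cons; case: (l == c); rewrite ?mul1r ?mul0r //; by case: ifP.
Qed.

Lemma vcoef_flatten (L : seq (vec F)) w : vcoef (flatten L) w = \sum_(a <- L) vcoef a w.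
Proof. by rewrite /vcoef big_flatten. Qed.

Lemma vcoef_single (c : F) (v w : word) : vcoef [:: (c, v)] w = (v == w)%:R * c.
Proof. by rewrite /vcoef big_cons big_nil addr0 /=; case: ifP; rewrite ?mul1r ?mul0r. Qed.

Lemma wstar_nil_r u : wstar q u [::] = [:: (1, u)].
Proof. by case: u. Qed.

Lemma vcoef_wstar_nil u v :
  vcoef (wstar q u v) [::] = ((u == [::]) && (v == [::]))%:R.
Proof.
case: u => [|a u]; first by rewrite /= vcoef_single mulr1.
case: v => [|b v]; first by rewrite /= vcoef_single mulr1.
by rewrite /= vcoef_cat vcoef_scale !vcoef_prefix_nil mulr0 addr0.
Qed.

Lemma wstar_cc a u b v : wstar q (a :: u) (b :: v) =
  vprefix a (wstar q u (b :: v)) ++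
  vscale (q ^ (\sum_(c0 <- a :: u) pairing c0 b)) (vprefix b (wstar q (a :: u) v)).
Proof. by []. Qed.

Lemma vcoef_wstar_cons u v c w :
  vcoef (wstar q u v) (c :: w) =
  (if u is a :: u' then (a == c)%:R * vcoef (wstar q u' v) w else 0)
  + (if v is b :: v' then (b == c)%:R * q ^ (\sum_(a0 <- u) pairing a0 b)
        * vcoef (wstar q u v') w else 0).
Proof.
case: u => [|a u].
  case: v => [|b v]; first by rewrite /= vcoef_single mul0r addr0.
  rewrite /= vcoef_single add0r big_nil expr0z mulr1 vcoef_single eqseq_cons.
  by case: (b == c); case: (v == w); rewrite /= ?mulr1 ?mul1r ?mul0r ?mulr0.
case: v => [|b v].
  rewrite wstar_nil_r vcoef_single eqseq_cons addr0.
  rewrite wstar_nil_r vcoef_single; by case: (a == c); case: (u == w); rewrite /= ?mulr1 ?mul1r ?mul0r ?mulr0.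
by rewrite wstar_cc vcoef_cat vcoef_scale !vcoef_prefix mulrCA mulrA.
Qed.

Lemma vcoef_wstar_size w : forall u v, (size u + size v != size w)%N ->
  vcoef (wstar q u v) w = 0.
Proof.
elim: w => [|c w IH] u v H.
  rewrite vcoef_wstar_nil; case: u H => [|a u] //; case: v => //.
rewrite vcoef_wstar_cons; case: u H => [|a u] H; case: v H => [|b v] H.
- by rewrite addr0.
- by rewrite add0r (IH [::] v) ?mulr0 //; move: H; rewrite /= add0n eqSS.
- by rewrite (IH u [::]) ?mulr0 ?addr0 //; move: H; rewrite /= addn0 eqSS.
- rewrite (IH u (b :: v)) ?(IH (a :: u) v) ?mulr0 ?addr0 //; move: H => /=;
  rewrite ?addSn ?addnS eqSS //.
Qed.

Definition Q (n : nat) : F := qint q (Posz n).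
Definition gstep (b : letter) (h : nat) : F :=
  if b then (q ^+ (2 * h))^-1 else q ^+ (2 * h).

Fixpoint piw (r : F) (h : nat) (u : word) : F :=
  match u with
  | [::] => (h == 0)%:R
  | c :: u' => if c then - Q h.+2 * piw r h.+1 u'
               else if h is h'.+1 then r * Q h * piw r h' u' else 0
  end.

Fixpoint Psi (r : F) (h : nat) (v w : word) : F :=
  match w with
  | [::] => ((h == 0) && (v == [::]))%:R
  | c :: w' => (if c then - Q h.+2 * Psi r h.+1 v w'
                else if h is h'.+1 then r * Q h * Psi r h' v w' else 0)
               + (if v is b :: v' then (b == c)%:R * r * gstep b h * Psi r h v' w'
                  else 0)
  end.

Lemma PsiZ r w : forall h v, (size w < size v)%N -> Psi r h v w = 0.
Proof.
elim: w => [|c w IH] h v H /=.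
  by case: v H => //= *; rewrite andbF.
have H' : (size w < size v)%N by apply: ltn_trans H.
case: v H H' => [|b v] H H' //.
have H2 : (size w < size v)%N by []. move: H => _; case: c; case: h => [|h]; rewrite ?IH ?mulr0 ?oppr0 ?addr0 //.
Qed.

Lemma neq0_mulr (x y : F) : x * y != 0 -> y != 0.
Proof. by move=> H; apply/negP => /eqP E; rewrite E mulr0 eqxx in H. Qed.

Lemma piw_sum r u : forall h, piw r h u != 0 -> \sum_(a <- u) lbar a = - (h%:Z).
Proof.
elim: u => [|c u IH] h /=.
  by case: h => [|h] /=; [rewrite big_nil | rewrite eqxx].
rewrite big_cons; case: c => /=.
  move=> /neq0_mulr /IH ->; rewrite /lbar; lia.
case: h => [|h]; first by rewrite eqxx.
move=> /neq0_mulr /IH ->; rewrite /lbar; lia.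
Qed.

Lemma pairingE a b : pairing a b = lbar a * (2 * lbar b).
Proof. by case: a; case: b. Qed.

Lemma pair_pow r h u b :
  piw r h u * q ^ (\sum_(a0 <- u) pairing a0 b) = piw r h u * gstep b h.
Proof.
have [->|H] := eqVneq (piw r h u) 0; first by rewrite !mul0r.
congr (_ * _).
under eq_bigr do rewrite pairingE.
rewrite -mulr_suml (piw_sum H) /gstep; case: b.
  have -> : - h%:Z * (2 * lbar true) = - Posz (2 * h) by rewrite /lbar; lia.
  by rewrite -exprnN.
have -> : - h%:Z * (2 * lbar false) = Posz (2 * h) by rewrite /lbar; lia.
by [].
Qed.

Lemma Psi_cons r h v c w : Psi r h v (c :: w) =
  (if c then - Q h.+2 * Psi r h.+1 v w
   else if h is h'.+1 then r * Q h * Psi r h' v w else 0)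
  + (if v is b :: v' then (b == c)%:R * r * gstep b h * Psi r h v' w else 0).
Proof. by []. Qed.

Lemma LP r w : forall h v m, (m + size v)%N = size w ->
  \sum_(u <- all_words m) piw r h u * r ^+ size v * vcoef (wstar q u v) w
  = Psi r h v w.
Proof.
elim: w => [|c w IH] h v m Hs.
  move: Hs; case: m => //; case: v => // _.
  by rewrite /= big_cons big_nil vcoef_wstar_nil /= expr0 !mulr1 addr0 andbT.
under eq_bigr do rewrite vcoef_wstar_cons mulrDr.
rewrite big_split Psi_cons; congr (_ + _).
  case: m Hs => [|m] Hs.
    rewrite [LHS]/= big_cons big_nil mulr0 addr0.
    have Hv : (size w < size v)%N by move: Hs; rewrite add0n => /= ->.
    move: Hs => _; case: c; case: h => [|h]; rewrite ?PsiZ ?mulr0 ?oppr0 //.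
  have Hs' : (m + size v)%N = size w by move: Hs; rewrite addSn => -[].
  rewrite [all_words _]/= cats0 big_cat !big_map [LHS]/=.
  move: Hs => _; case: c; case: h => [|h]; rewrite /lx /ly /=.
  - by rewrite -(IH _ _ _ Hs') mulr_sumr -big_split; apply: eq_bigr => j _ /=; ring.
  - by rewrite -(IH _ _ _ Hs') mulr_sumr -big_split; apply: eq_bigr => j _ /=; ring.
  - by rewrite -big_split big1 // => j _ /=; ring.
  - by rewrite -(IH _ _ _ Hs') mulr_sumr -big_split; apply: eq_bigr => j _ /=; ring.
case: v Hs => [|b v] Hs.
  by rewrite big1 // => u _; rewrite mulr0.
have Hs' : (m + size v)%N = size w by move: Hs => /=; rewrite addnS => -[].
rewrite -(IH _ _ _ Hs') mulr_sumr; apply: eq_bigr => u _.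
rewrite [size (b :: v)]/= exprS.
transitivity ((b == c)%:R * r * r ^+ size v * vcoef (wstar q u v) w *
   (piw r h u * q ^ (\sum_(a0 <- u) pairing a0 b))); first by ring.
rewrite pair_pow; ring.
Qed.

Fixpoint Bf (r : F) (h : nat) (s : bool) (w : word) : F :=
  match w with
  | [::] => ((h == 0) && ~~ s)%:R
  | c :: w' => (if c then - Q h.+2 * Bf r h.+1 s w'
                else if h is h'.+1 then r * Q h * Bf r h' s w' else 0)
     + (if c then (if s then 0 else r * gstep true h * Bf r h true w')
        else (if s then r * gstep false h * Bf r h false w' else 0))
  end.

Lemma Bf_cons r h s c w : Bf r h s (c :: w) =
  (if c then - Q h.+2 * Bf r h.+1 s w
   else if h is h'.+1 then r * Q h * Bf r h' s w else 0)
  + (if c then (if s then 0 else r * gstep true h * Bf r h true w)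
     else (if s then r * gstep false h * Bf r h false w else 0)).
Proof. by []. Qed.

Definition Gw (k : nat) : word := flatten (nseq k [:: lx; ly]).
Definition V (s : bool) (k : nat) : word := if s then ly :: Gw k else Gw k.

Lemma size_Gw k : size (Gw k) = (2 * k)%N.
Proof. elim: k => [|k IH] //=; rewrite IH; lia. Qed.

Lemma LB r w : forall h s N, (size w < 2 * N)%N ->
  Bf r h s w = \sum_(k < N) Psi r h (V s k) w.
Proof.
elim: w => [|c w IH] h s N HN.
  case: N HN => [|N] // _.
  rewrite big_ord_recl big1 ?addr0 /=; first by rewrite /V; case: s.
  by move=> k _; rewrite /V; case: s; rewrite andbF.
have HN' : (size w < 2 * N)%N by apply: ltn_trans HN.
under eq_bigr do rewrite Psi_cons.
rewrite Bf_cons big_split /=; congr (_ + _).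
  move: HN => _; case: c; case: h => [|h]; rewrite ?(IH _ _ _ HN') ?mulr_sumr //; by rewrite big1.
move: HN' => HN'.
case: s; case: c HN => HN.
- by rewrite big1 // => k _; rewrite /V /= !mul0r.
- rewrite (IH _ _ _ HN') mulr_sumr; apply: eq_bigr => k _.
  by rewrite /V /gstep /= mul1r.
- case: N HN HN' => [|N] HN HN' //.
  rewrite big_ord_recl /= add0r.
  rewrite (IH _ _ _ HN') big_ord_recr /= PsiZ; last first.
    rewrite /= size_Gw; move: HN => /=; lia.
  rewrite addr0 mulr_sumr; apply: eq_bigr => k _.
  by rewrite /V /gstep /= mul1r.
- by rewrite big1 // => k _; rewrite /V /=; case: k => [[|k]] //= _; rewrite !mul0r.
Qed.

Definition valid (z : int) (u : word) : bool :=
  all (fun i => 0 <= z + psum u i) (iota 1 (size u)) && (z + psum u (size u) == 0).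

Lemma psum0 u : psum u 0 = 0.
Proof. by rewrite /psum take0 big_nil. Qed.

Lemma psumS c u i : psum (c :: u) i.+1 = lbar c + psum u i.
Proof. by rewrite /psum /= big_cons. Qed.

Lemma valid_nil z : valid z [::] = (z == 0).
Proof. by rewrite /valid /= psum0 addr0. Qed.

Lemma valid_cons z c u :
  valid z (c :: u) = (0 <= z + lbar c) && valid (z + lbar c) u.
Proof.
rewrite /valid /= psumS psum0 addr0 andbA psumS addrA; congr (_ && _ && _).
rewrite -(addn1 1) iotaDl all_map; apply: eq_all => i /=.
by rewrite add1n psumS addrA.
Qed.

Lemma CL r u : forall h : nat, piw r h u =
  (valid h u)%:R * (-1) ^+ (count id u) * r ^+ (count negb u) *
  \prod_(1 <= i < (size u).+1) qint q (1 + h%:Z + psum u i).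
Proof.
elim: u => [|c u IH] h.
  by rewrite /= valid_nil big_geq // !mulr1.
rewrite valid_cons [size _]/= big_ltn // big_add1 /= psumS psum0 addr0.
case: c => /=.
  rewrite IH (eq_bigr (fun i => qint q (1 + h.+1%:Z + psum u i))); last first.
    by move=> i _; rewrite psumS /lbar; congr (qint q _); lia.
  have -> : 1 + h%:Z + 1 = h.+2%:Z by lia.
  have -> : (h%:Z + 1) = h.+1%:Z by lia.
  rewrite add0n exprS /Q; ring.
case: h => [|h].
  have -> : (0 <= Posz 0 - 1) = false by [].
  by rewrite !mul0r.
rewrite IH (eq_bigr (fun i => qint q (1 + h%:Z + psum u i))); last first.
  by move=> i _; rewrite psumS /lbar; congr (qint q _); lia.
have -> : (h.+1%:Z - 1) = h%:Z by lia.
have -> : 1 + h.+1%:Z - 1 = h.+1%:Z by lia.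
rewrite add0n exprS /Q; ring.
Qed.

Lemma catalan_valid u : catalan u = valid 0 u.
Proof.
rewrite /catalan /valid add0r.
case E: (psum u (size u) == 0); rewrite ?andbF ?andbT //.
apply/forallP/allP => H i.
  rewrite mem_iota => /andP [H1 H2]; rewrite add0r.
  have [Hi|Hi] := ltnP i (size u).
    by have := H (Ordinal Hi); rewrite /= H1.
  have -> : i = size u by lia.
  by rewrite (eqP E).
apply/implyP => H1; have := H i; rewrite mem_iota H1 /= add0r; apply.
by have := ltn_ord i; lia.
Qed.

Lemma psum_count u : psum u (size u) = (count id u)%:Z - (count negb u)%:Z.
Proof.
rewrite /psum take_size; elim: u => [|c u IH]; first by rewrite big_nil.
by rewrite big_cons IH; case: c; rewrite /lbar /=; lia.
Qed.

Lemma cat_count u i : size u = (2 * i)%N -> catalan u ->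
  count id u = i /\ count negb u = i.
Proof.
move=> Hs; rewrite /catalan => /andP [_ /eqP].
rewrite psum_count => H.
have := count_predC id u.
have -> : count (predC id) u = count negb u by [].
rewrite Hs; lia.
Qed.

Lemma all_words_size m u : u \in all_words m -> size u = m.
Proof.
elim: m u => [|m IH] u; first by rewrite /= inE => /eqP ->.
rewrite [all_words _]/= !mem_cat in_nil orbF => /orP [] /mapP [u' Hu' ->] /=; by rewrite IH.
Qed.

Lemma vstar_cat i k w : vcoef (vstar q (Cat q i) (Gt F k)) w =
  \sum_(u <- all_words (2 * i) | catalan u)
     (qint q 1 * \prod_(1 <= j < (2 * i).+1) qint q (1 + psum u j))
     * vcoef (wstar q u (Gw k)) w.
Proof.
rewrite /vstar vcoef_flatten big_allpairs_dep /Cat big_map big_filter.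
apply: eq_bigr => u _.
by rewrite /Gt big_cons big_nil /= addr0 vcoef_scale mulr1.
Qed.

Lemma Qnat n : Q n = (q ^+ n - (q ^+ n)^-1) / (q - q^-1).
Proof. by rewrite /Q /qint exprnN -exprnP. Qed.

Lemma g2 n : q ^+ (2 * n) = (q ^+ n) ^+ 2.
Proof. by rewrite mulnC exprM. Qed.

Hypothesis hq0 : q != 0.
Hypothesis hqq : q - q^-1 != 0.
Hypothesis hq2 : q * q - 1 != 0.

Lemma hX n : q ^+ n != 0.
Proof. exact: expf_neq0. Qed.

Ltac qsimpl := rewrite /gstep ?Qnat ?g2 ?expr0 ?exprS ?expr0 ?mulr1.

Lemma REL w : forall h,
  [/\ Bf q^-1 0 false w = Bf q 0 false w,
      Bf q^-1 h true w = - Q h.+1 * (q ^+ h)^-1 * Bf q h true w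
                         + Q h.+2 * q^-1 * Bf q h.+1 false w
    & Bf q^-1 h.+1 false w = (q ^+ h)^-1 * Bf q^-1 h true w].
Proof.
elim: w => [|c w IH] h.
  by split; rewrite /= ?andbF ?mulr0 ?addr0.
have hXh := hX h.
split.
- rewrite !Bf_cons; case: c; last by [].
  have [I0 I1 I2] := IH 0%N.
  by rewrite I2 I1 /=; qsimpl; field; rewrite ?oner_eq0 ?hq0 ?hq2.
- rewrite !Bf_cons; case: c.
    have [_ I1 _] := IH h.+1.
    by rewrite I1 /=; qsimpl; field; rewrite ?oner_eq0 ?hq0 ?hq2 ?hX.
  case: h hXh => [|h] hXh.
    have [I0 _ _] := IH 0%N.
    by rewrite I0 /=; qsimpl; field; rewrite ?oner_eq0 ?hq0 ?hq2 ?hX.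
  have [_ I1 I2] := IH h.
  by rewrite I2 I1 /=; qsimpl; field; rewrite ?oner_eq0 ?hq0 ?hq2 ?hX.
- rewrite !Bf_cons; case: c.
    have [_ _ I2] := IH h.+1.
    by rewrite I2 /=; qsimpl; field; rewrite ?oner_eq0 ?hq0 ?hq2 ?hX.
  case: h hXh => [|h] hXh.
    by rewrite /=; qsimpl; field; rewrite ?oner_eq0 ?hq0 ?hq2 ?hX.
  have [_ _ I2] := IH h.
  by rewrite I2 /=; qsimpl; field; rewrite ?oner_eq0 ?hq0 ?hq2 ?hX.
Qed.

Lemma qint1 : qint q 1 = 1.
Proof. by rewrite /qint expr1z exprN1 divff. Qed.

Lemma key r n i w : (i <= n)%N -> size w = (2 * n)%N ->
  (-1) ^+ i * r ^+ (2 * n - i) *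
  \sum_(u <- all_words (2 * i) | catalan u)
     (qint q 1 * \prod_(1 <= j < (2 * i).+1) qint q (1 + psum u j))
     * vcoef (wstar q u (Gw (n - i))) w
  = Psi r 0 (Gw (n - i)) w.
Proof.
move=> Hi Hw.
rewrite -(@LP r w 0 (Gw (n - i)) (2 * i)); last by rewrite size_Gw Hw; lia.
rewrite big_mkcond mulr_sumr big_seq [RHS]big_seq; apply: eq_bigr => u Hu.
have Hs := all_words_size Hu.
rewrite CL -catalan_valid qint1.
case Hc: (catalan u); last by rewrite !mul0r mulr0.
have [c1 c2] := cat_count Hs Hc.
rewrite c1 c2 Hs size_Gw.
rewrite (eq_bigr (fun j => qint q (1 + psum u j))); last first.
  by move=> j _; congr (qint q _); lia.
have -> : (2 * n - i = i + 2 * (n - i))%N by lia.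
rewrite exprD (_ : true%:R = 1 :> F) //; ring.
Qed.

End Work.

Unset Implicit Arguments.
Set Strict Implicit.

Theorem theorem11p14 (F : fieldType) (q : F) (hq0 : q != 0)
    (hq : forall m : nat, (0 < m)%N -> q ^+ m != 1) (n : nat) :
  forall w : word,
    vcoef
      (flatten [seq vscale ((-1) ^+ i * qint q (Posz (2 * n)%N - Posz i))
                       (vstar q (Cat q i) (Gt F (n - i)%N))
               | i <- iota 0 n.+1])
      w = 0.
Proof.
move=> w.
have hq2 : q * q - 1 != 0 by have := hq 2%N isT; rewrite expr2 subr_eq0.
have hqq : q - q^-1 != 0.
  have -> : q - q^-1 = (q * q - 1) / q by field.
  by rewrite mulf_neq0 ?invr_eq0.
rewrite vcoef_flatten big_map.
under eq_bigr do rewrite vcoef_scale vstar_cat.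
case: (eqVneq (size w) (2 * n)%N) => Hw; last first.
  rewrite big_seq big1 // => i; rewrite mem_iota => /andP [_ Hi].
  rewrite big_seq_cond big1 ?mulr0 // => u /andP [Hu _].
  rewrite vcoef_wstar_size ?mulr0 // size_Gw (all_words_size Hu).
  move: Hw Hi; lia.
transitivity (\sum_(i <- iota 0 n.+1)
   (Psi q q 0 (Gw (n - i)) w - Psi q q^-1 0 (Gw (n - i)) w) / (q - q^-1)).
  rewrite big_seq [RHS]big_seq; apply: eq_bigr => i; rewrite mem_iota => /andP [_ Hi].
  have Hi' : (i <= n)%N by move: Hi; lia.
  rewrite -!(key hq0 hqq hq2 _ Hi' Hw) /qint.
  have -> : Posz (2 * n) - Posz i = Posz (2 * n - i) by lia.
  rewrite -exprnP -exprnN exprVn; field; by rewrite hq0 hq2 expf_neq0.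
rewrite -mulr_suml sumrB.
have E : forall r, \sum_(i <- iota 0 n.+1) Psi q r 0 (Gw (n - i)) w = Bf q r 0 false w.
  move=> r; rewrite (@LB F q r w 0 false n.+1); last by rewrite Hw; lia.
  change (\sum_(0 <= i < n.+1) Psi q r 0 (Gw (n - i)) w = \sum_(k < n.+1) Psi q r 0 (V false k) w).
  rewrite big_nat_rev big_mkord; apply: eq_bigr => k _ /=.
  by congr (Psi _ _ _ (Gw _) _); have := ltn_ord k; lia.
rewrite !E.
have [R0 _ _] := REL hq0 hq2 w 0.
by rewrite R0 subrr mul0r.
Qed.
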